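(* Let $\mathcal{M}=\langle M,\circ,e\rangle$ be an effective mge monoid and let $\mathcal{T}=\langle \Sigma^*\times\mathcal{M},Q,I,F,\Delta\rangle$ be an arbitrary (not necessarily real-time) functional monoidal finite-state transducer with $\langle\varepsilon,e\rangle\in L(\mathcal{T})$. Then there is a bimachine $\mathcal{B}=\langle\mathcal{M},\mathcal{A}_L,\mathcal{A}_R,\psi\rangle$ such that $\mathcal{A}_L$ has at most $2^{|Q|}$ states, $\mathcal{A}_R$ has at most $2^{|Q|}$ states, and $O_{\mathcal{B}}=O_{\mathcal{T}}$ (as partial functions $\Sigma^*\to M$).
   Context: A monoid $\langle M,\circ,e\rangle$ has right cancellation if $ac=bc$ implies $a=b$. A tuple $\langle m_1,\dots,m_n\rangle\in M^n$ is equalizable if there is $\langle x_1,\dots,x_n\rangle\in M^n$ (an equalizer) with $m_1x_1=\dots=m_nx_n$; an instance of an equalizer $\langle x_1,\dots,x_n\rangle$ is any $\langle x_1x,\dots,x_nx\rangle$ with $x\in M$; a most general equalizer (mge) is an equalizer of which every equalizer is an instance. An mge monoid is a monoid with right cancellation in which every equalizable pair has an mge. An element $m$ is invertible if $mn=e$ for some $n$ (denoted $m^{-1}$). An mge monoid is effective if (i) $M$ is represented as a recursive subset of $\mathbb{N}$ with computable operation, (ii) equality is decidable, (iii) it is decidable whether a pair is equalizable and there is a computable function $\eta:M^2\to M^2$ with $\eta(m,m')$ an mge of $\langle m,m'\rangle$ for every equalizable pair, (iv) inverses of invertible elements are computable. A monoidal finite-state transducer is $\mathcal{T}=\langle\Sigma^*\times\mathcal{M},Q,I,F,\Delta\rangle$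 with $\Sigma$ a finite alphabet, $Q$ finite, $I,F\subseteq Q$, and finite $\Delta\subseteq Q\times((\Sigma\cup\{\varepsilon\})\times M)\times Q$. The generalized transition relation $\Delta^*$ is the least set containing $\langle q,\langle\varepsilon,e\rangle,q\rangle$ for all $q$ and closed under: $\langle q_1,\langle u,w\rangle,q_2\rangle\in\Delta^*$ and $\langle q_2,\langle a,m\rangle,q_3\rangle\in\Delta$ imply $\langle q_1,\langle ua,wm\rangle,q_3\rangle\in\Delta^*$. $L(\mathcal{T})=\{\langle u,m\rangle:\exists p\in I,q\in F,\ \langle p,\langle u,m\rangle,q\rangle\in\Delta^*\}$. $\mathcal{T}$ is functional if $L(\mathcal{T})$ is (the graph of) a partial function, denoted $O_{\mathcal{T}}:\Sigma^*\to M$. A bimachine is $\mathcal{B}=\langle\mathcal{M},\mathcal{A}_L,\mathcal{A}_R,\psi\rangle$ where $\mathcal{A}_L=\langle\Sigma,L,s_L,L,\delta_L\rangle$ and $\mathcal{A}_R=\langle\Sigma,R,s_R,R,\delta_R\rangle$ are deterministic finite automata (all states final) and $\psi:L\times\Sigma\times R\to M$ is a partial function. Define $\psi^*(l,\varepsilon,r)=e$ and $\psi^*(l,t\sigma,r)=\psi^*(l,t,\delta_R(r,\sigma))\circ\psi(\delta_L^*(l,t),\sigma,r)$; the function represented by $\mathcal{B}$ is $O_{\mathcal{B}}(t)=\psi^*(s_L,t,s_R)$ (partial). *)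

(* Defs.v *)
From mathcomp Require Import all_boot.
Set Implicit Arguments. Unset Strict Implicit. Unset Printing Implicit Defensive.

Section Monoid.
Variables (M : eqType) (op : M -> M -> M) (e : M).

Definition is_monoid : Prop :=
  [/\ forall a b c, op a (op b c) = op (op a b) c,
      forall a, op e a = a & forall a, op a e = a].

Definition right_cancellative : Prop :=
  forall a b c, op a c = op b c -> a = b.

Definition equalizer (m1 m2 : M) (x : M * M) : Prop :=
  op m1 x.1 = op m2 x.2.

Definition equalizable (m1 m2 : M) : Prop := exists x, equalizer m1 m2 x.

Definition instance_of (x y : M * M) : Prop :=
  exists z, y = (op x.1 z, op x.2 z).

Definition mge (m1 m2 : M) (x : M * M) : Prop :=
  equalizer m1 m2 x /\ forall y, equalizer m1 m2 y -> instance_of x y.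

Definition is_mge_monoid : Prop :=
  [/\ is_monoid, right_cancellative &
      forall m1 m2, equalizable m1 m2 -> exists x, mge m1 m2 x].

Definition invertible (m : M) : Prop := exists n, op m n = e.

(* Effectiveness: the carrier has decidable equality (eqType), the operation
   is a (computable) Rocq function, and the deciders / mge function / inverse
   function are given as Rocq functions with their specifications. *)
Definition is_effective (eqz : M -> M -> bool) (eta : M -> M -> M * M)
  (inv : M -> M) : Prop :=
  [/\ forall m1 m2, eqz m1 m2 <-> equalizable m1 m2,
      forall m1 m2, equalizable m1 m2 -> mge m1 m2 (eta m1 m2) &
      forall m, invertible m -> op m (inv m) = e].

End Monoid.

Section Transducer.
Variables (M : eqType) (op : M -> M -> M) (e : M).
Variables (Sigma Q : finType).
(* transitions <q, <a, m>, q'> with a in Sigma \cup {eps} (None = eps) *)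
Variable Delta : seq (Q * (option Sigma * M) * Q).

Inductive delta_star : Q -> seq Sigma -> M -> Q -> Prop :=
| ds_refl q : delta_star q [::] e q
| ds_step q1 u w q2 a m q3 :
    delta_star q1 u w q2 -> (q2, (a, m), q3) \in Delta ->
    delta_star q1 (if a is Some s then rcons u s else u) (op w m) q3.

Definition lang (I F : {set Q}) (u : seq Sigma) (m : M) : Prop :=
  exists p q, [/\ p \in I, q \in F & delta_star p u m q].

Definition functional (I F : {set Q}) : Prop :=
  forall u m m', lang I F u m -> lang I F u m' -> m = m'.
End Transducer.

Section Bimachine.
Variables (M : eqType) (op : M -> M -> M) (e : M).
Variables (Sigma L R : finType).
Variables (dL : L -> Sigma -> L) (dR : R -> Sigma -> R).
Variable psi : L -> Sigma -> R -> option M.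

(* psi_star on the reversed word: rt = rev t *)
Fixpoint psi_star_rev (l : L) (rt : seq Sigma) (r : R) : option M :=
  match rt with
  | [::] => Some e
  | s :: rt' =>
      match psi_star_rev l rt' (dR r s), psi (foldl dL l (rev rt')) s r with
      | Some a, Some b => Some (op a b)
      | _, _ => None
      end
  end.

(* psi^*(l, t, r); psi^*(l, t s, r) = psi^*(l, t, dR r s) o psi(dL^*(l,t), s, r) *)
Definition psi_star (l : L) (t : seq Sigma) (r : R) : option M :=
  psi_star_rev l (rev t) r.

Definition bimachine_output (sL : L) (sR : R) (t : seq Sigma) : option M :=
  psi_star sL t sR.
End Bimachine.

(* Main.v *)
Require Import Defs.
From mathcomp Require Import all_boot.
From Stdlib Require Import Classical ClassicalEpsilon.
Set Implicit Arguments. Unset Strict Implicit. Unset Printing Implicit Defensive.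

Definition pb (P : Prop) : bool := if excluded_middle_informative P then true else false.
Lemma pbP P : reflect P (pb P).
Proof. rewrite /pb; case: excluded_middle_informative => h; constructor => //. Qed.

Lemma fchoice (A B : Type) (P : A -> B -> Prop) :
  (forall a, exists b, P a b) -> exists f : A -> B, forall a, P a (f a).
Proof.
move=> H; exists (fun a => proj1_sig (constructive_indefinite_description _ (H a))).
move=> a; exact: proj2_sig (constructive_indefinite_description _ (H a)).
Qed.

Lemma fchoiceD (A B : Type) (C : A -> Prop) (P : A -> B -> Prop) (b0 : B) :
  (forall a, C a -> exists b, P a b) -> exists f : A -> B, forall a, C a -> P a (f a).
Proof.
move=> H; apply: (fchoice (P := fun a b => C a -> P a b)) => a.
case: (classic (C a)) => [Ca|nCa]; first by have [b Hb] := H a Ca; exists b.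
by exists b0.
Qed.

Section Main.
Variables (M : eqType) (op : M -> M -> M) (e : M).
Hypothesis opA : forall a b c, op a (op b c) = op (op a b) c.
Hypothesis op1m : forall a, op e a = a.
Hypothesis opm1 : forall a, op a e = a.
Hypothesis Hrc : forall a b c, op a c = op b c -> a = b.
Hypothesis Hmg : forall m1 m2, equalizable op m1 m2 -> exists x, mge op m1 m2 x.
Local Infix "**" := op (at level 40, left associativity).

Lemma mge_tuple (T : eqType) (s : seq T) (a : T -> M) :
  (exists y c, forall q, q \in s -> a q ** y q = c) ->
  exists g c0, (forall q, q \in s -> a q ** g q = c0) /\
   (forall y c, (forall q, q \in s -> a q ** y q = c) ->
      exists z, c = c0 ** z /\ forall q, q \in s -> y q = g q ** z).
Proof.
elim: s => [|x s IH] [y [c Hy]].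
  exists (fun _ => e), e; split => // y' c' _; exists c'; split => //.
have Hy' : forall q, q \in s -> a q ** y q = c.
  by move=> q hq; apply: Hy; rewrite inE hq orbT.
have [g [c0 [Hg Hinst]]] := IH (ex_intro _ y (ex_intro _ c Hy')).
have [z [Hc Hz]] := Hinst y c Hy'.
have Heq : equalizable op c0 (a x).
  exists (z, y x); rewrite /equalizer /= -Hc; apply/esym/Hy; exact: mem_head.
have [[h1 h2] [Hh Hhi]] := Hmg Heq.
rewrite /equalizer /= in Hh.
exists (fun q => if q == x then h2 else g q ** h1), (c0 ** h1); split.
  move=> q; rewrite inE; case: eqP => [-> _|_ /= hq]; first by rewrite Hh.
  by rewrite opA Hg.
move=> y' c' Hy2.
have Hy2' : forall q, q \in s -> a q ** y' q = c'.
  by move=> q hq; apply: Hy2; rewrite inE hq orbT.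
have [z1 [Hc1 Hz1]] := Hinst y' c' Hy2'.
have [z' Hz'] : instance_of op (h1, h2) (z1, y' x).
  apply: Hhi; rewrite /equalizer /= -Hc1; apply/esym/Hy2; exact: mem_head.
case: Hz' => E1 E2.
exists z'; split; first by rewrite Hc1 E1 opA.
move=> q; rewrite inE; case: eqP => [->|_ /= hq] //.
by rewrite Hz1 // E1 opA.
Qed.


Variables (Sigma Q : finType) (I F : {set Q}).
Variable Delta : seq (Q * (option Sigma * M) * Q).
Hypothesis Hfun : functional op e Delta I F.
Hypothesis Heps : lang op e Delta I F [::] e.

Local Notation ds := (delta_star op e Delta).

Lemma ds_cat p u w1 q v w2 r : ds p u w1 q -> ds q v w2 r -> ds p (u ++ v) (w1 ** w2) r.
Proof.
move=> H1 H2; elim: H2 H1 => [q'|q1 v0 w q2 a m q3 _ IH Ht] H1.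
  by rewrite cats0 opm1.
have := ds_step (IH H1) Ht; case: a {Ht} => [s|]; by rewrite -?rcons_cat opA.
Qed.

Inductive lpath : Q -> seq Sigma -> M -> Q -> Prop :=
| lpath0 q : lpath q [::] e q
| lpathS p u w1 q1 w2 q2 s m q3 : lpath p u w1 q1 -> ds q1 [::] w2 q2 ->
    (q2, (Some s, m), q3) \in Delta -> lpath p (rcons u s) ((w1 ** w2) ** m) q3.

Lemma lpath_ds p u w q : lpath p u w q -> ds p u w q.
Proof.
elim => [q'|p' u' w1 q1 w2 q2 s m q3 _ IH H2 Ht]; first exact: ds_refl.
have := ds_step (ds_cat IH H2) Ht; by rewrite cats0.
Qed.

Lemma lpath_nil p w q : lpath p [::] w q -> p = q /\ w = e.
Proof.
have H : forall x, lpath p x w q -> x = [::] -> p = q /\ w = e.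
  move=> x; case => [q'|p' u w1 q1 w2 q2 s m q3 _ _ _] // /eqP.
  by rewrite -size_eq0 size_rcons.
by move=> /H; apply.
Qed.

Lemma lpath_rcons p u s w q : lpath p (rcons u s) w q ->
  exists w1 q1 w2 q2 m, [/\ lpath p u w1 q1, ds q1 [::] w2 q2,
     (q2, (Some s, m), q) \in Delta & w = (w1 ** w2) ** m].
Proof.
have H : forall x, lpath p x w q -> x = rcons u s -> exists w1 q1 w2 q2 m, [/\ lpath p u w1 q1, ds q1 [::] w2 q2,
     (q2, (Some s, m), q) \in Delta & w = (w1 ** w2) ** m].
  move=> x; case => [q'|p' u' w1 q1 w2 q2 s' m q3 H1 H2 H3].
    by move/(f_equal size); rewrite size_rcons.
  case/rcons_inj => ??; subst.
  by exists w1, q1, w2, q2, m.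
by move=> /H; apply.
Qed.

Lemma lpath_snoc a u w1 b s w2 c : lpath a u w1 b -> lpath b [:: s] w2 c ->
  lpath a (rcons u s) (w1 ** w2) c.
Proof.
move=> H1 /(@lpath_rcons _ [::]) [w0 [q1 [w [q2 [m [H0 Hd Ht ->]]]]]].
case: (lpath_nil H0) => ? ->; subst.
rewrite op1m opA; exact: lpathS H1 Hd Ht.
Qed.

Lemma eps_lpath1 p r f s w q : ds p [::] r f -> lpath f [:: s] w q -> lpath p [:: s] (r ** w) q.
Proof.
move=> Hr /(@lpath_rcons _ [::]) [w0 [q1 [w' [q2 [m [H0 Hd Ht ->]]]]]].
case: (lpath_nil H0) => ? ->; subst.
have := lpathS (lpath0 p) (ds_cat Hr Hd) Ht.
by rewrite /= op1m op1m !opA.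
Qed.

Lemma ds_split p x W r : ds p x W r -> forall u v, x = u ++ v ->
  exists q w1 w2, [/\ lpath p u w1 q, ds q v w2 r & W = w1 ** w2].
Proof.
elim => [q|q1 x0 w q2 a m q3 Hd IH Ht] u v.
  case: u => // ; case: v => // _.
  by exists q, e, e; split; [exact: lpath0 | exact: ds_refl | rewrite op1m].
case: a Ht => [s|] Ht Hx; last first.
  have [q [w1 [w2 [H1 H2 ->]]]] := IH u v Hx.
  exists q, w1, (w2 ** m); split; [exact: H1 | exact: (ds_step H2 Ht) | by rewrite opA].
case/lastP: v Hx => [|v' s'].
  rewrite cats0 => <-.
  have [q [w1 [w2 [H1 H2 ->]]]] := IH x0 [::] (esym (cats0 _)).
  exists q3, ((w1 ** w2) ** m), e; split; last by rewrite opm1.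
  - exact: lpathS H1 H2 Ht.
  - exact: ds_refl.
rewrite -rcons_cat => /rcons_inj [Hx <-].
have [q [w1 [w2 [H1 H2 ->]]]] := IH u v' Hx.
exists q, w1, (w2 ** m); split; [exact: H1 | exact: (ds_step H2 Ht) | by rewrite opA].
Qed.

Definition LP t w q := exists2 p, p \in I & lpath p t w q.
Definition SP q v w := exists2 f, f \in F & ds q v w f.

Lemma lang_split u v m : lang op e Delta I F (u ++ v) m <->
  exists q w1 w2, [/\ LP u w1 q, SP q v w2 & m = w1 ** w2].
Proof.
split.
  case=> p [f [Hp Hf Hd]].
  have [q [w1 [w2 [H1 H2 ->]]]] := ds_split Hd (erefl _).
  by exists q, w1, w2; split => //; [exists p | exists f].
case=> q [w1 [w2 [[p Hp H1] [f Hf H2] ->]]].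
exists p, f; split => //; exact: ds_cat (lpath_ds H1) H2.
Qed.

Lemma F3 u v w q V w' q' V' : LP u w q -> SP q v V -> LP u w' q' -> SP q' v V' ->
  w ** V = w' ** V'.
Proof.
move=> H1 H2 H3 H4; apply: (Hfun (u := u ++ v)); apply/lang_split.
  by exists q, w, V.
by exists q', w', V'.
Qed.


Definition dL (X : {set Q}) (s : Sigma) : {set Q} :=
  [set q | pb (exists2 p, p \in X & exists w, lpath p [:: s] w q)].
Definition dR (Y : {set Q}) (s : Sigma) : {set Q} :=
  [set p | pb (exists2 q, q \in Y & exists w, lpath p [:: s] w q)].
Definition sR : {set Q} := [set q | pb (exists w, SP q [::] w)].
Definition Lof u := foldl dL I u.
Definition Rof v := foldr (fun s Y => dR Y s) sR v.

Lemma Lof_rcons u s : Lof (rcons u s) = dL (Lof u) s.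
Proof. by rewrite /Lof foldl_rcons. Qed.

Lemma Lof_spec u q : q \in Lof u <-> exists w, LP u w q.
Proof.
elim/last_ind: u q => [|u s IH] q.
  rewrite /Lof /=; split => [Hq|[w [p Hp /lpath_nil [Epq _]]]]; last by rewrite -Epq.
  by exists e, q => //; exact: lpath0.
rewrite Lof_rcons inE; split.
  move/pbP => [p /IH [w1 [p0 Hp0 H1]] [w2 H2]].
  by exists (w1 ** w2), p0 => //; exact: lpath_snoc H1 H2.
case=> w [p0 Hp0 /lpath_rcons [w1 [q1 [w2 [q2 [m [H1 H2 H3 _]]]]]]].
apply/pbP; exists q1; first by apply/IH; exists w1, p0.
exists ((e ** w2) ** m); exact: lpathS (lpath0 q1) H2 H3.
Qed.

Lemma Rof_spec v q : q \in Rof v <-> exists w, SP q v w.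
Proof.
elim: v q => [|s v IH] q.
  by rewrite inE; split => /pbP.
change (q \in dR (Rof v) s <-> exists w, SP q (s :: v) w).
rewrite inE; split.
  move/pbP => [q1 /IH [w1 [f Hf H1]] [w H]].
  exists (w ** w1), f => //; exact: (ds_cat (lpath_ds H) H1).
case=> W [f Hf Hd].
have [q1 [w1 [w2 [H1 H2 _]]]] := ds_split Hd (erefl ([:: s] ++ v)).
apply/pbP; exists q1; last by exists w1.
by apply/IH; exists w2, f.
Qed.

Lemma rho_ex : exists rho : Q -> M, forall q, q \in sR -> SP q [::] (rho q).
Proof.
apply: (fchoiceD (C := fun q => q \in sR) (P := fun q w => SP q [::] w) e) => q.
by rewrite inE => /pbP.
Qed.

Definition rho := proj1_sig (constructive_indefinite_description _ rho_ex).
Lemma rhoP q : q \in sR -> SP q [::] (rho q).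
Proof. by rewrite /rho; case: constructive_indefinite_description => r Hr /=; apply: Hr. Qed.

Definition Gspec (X Y : {set Q}) (g : Q -> M) :=
  (exists u, Lof u = X) -> (exists v, Rof v = Y) ->
  exists u, Lof u = X /\ exists a : Q -> M,
   [/\ forall q, q \in X :&: Y -> LP u (a q) q,
       forall b, (exists c, forall q, q \in X :&: Y -> a q ** b q = c) ->
          exists z, forall q, q \in X :&: Y -> b q = g q ** z
     & X = I -> forall q, q \in X :&: Y -> g q = e].

Lemma Gex X Y : exists g, Gspec X Y g.
Proof.
case: (classic (exists u, Lof u = X)) => [[u0 Hu0]|hX]; last by exists (fun _ => e) => /hX.
case: (classic (exists v, Rof v = Y)) => [[v0 Hv0]|hY]; last by exists (fun _ => e) => _ /hY.
case: (classic (X = I)) => [XI|XnI].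
  exists (fun _ => e) => _ _; exists [::]; split; first by rewrite XI.
  exists (fun _ => e); split => //.
  - move=> q; rewrite inE XI => /andP [Hq _]; exists q => //; exact: lpath0.
  - move=> b [c Hc]; exists c => q Hq; by rewrite op1m -(Hc q Hq) op1m.
have [a Ha] : exists a : Q -> M, forall q, q \in X -> LP u0 (a q) q.
  apply: (fchoiceD (C := fun q => q \in X) (P := fun q w => LP u0 w q) e) => q.
  by rewrite -Hu0 => /Lof_spec [w Hw]; exists w.
have [V HV] : exists V : Q -> M, forall q, q \in Y -> SP q v0 (V q).
  apply: (fchoiceD (C := fun q => q \in Y) (P := fun q w => SP q v0 w) e) => q.
  by rewrite -Hv0 => /Rof_spec [w Hw]; exists w.
have Hex : exists y c, forall q, q \in enum (X :&: Y) -> a q ** y q = c.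
  exists V; case: (set_0Vmem (X :&: Y)) => [E|[q0 Hq0]].
    by exists e => q; rewrite mem_enum E inE.
  exists (a q0 ** V q0) => q; rewrite mem_enum => Hq.
  case/setIP: Hq => HqX HqY; case/setIP: Hq0 => Hq0X Hq0Y.
  exact: F3 (Ha q HqX) (HV q HqY) (Ha q0 Hq0X) (HV q0 Hq0Y).
have [g [c0 [Hg Hinst]]] := mge_tuple Hex.
exists g => _ _; exists u0; split => //; exists a; split => //.
- by move=> q /setIP [Hq _]; apply: Ha.
- move=> b [c Hc].
  have [|z [_ Hz]] := Hinst b c; first by move=> q; rewrite mem_enum; apply: Hc.
  by exists z => q Hq; apply: Hz; rewrite mem_enum.
Qed.

Definition G X Y := proj1_sig (constructive_indefinite_description _ (Gex X Y)).
Lemma GP X Y : Gspec X Y (G X Y).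
Proof. by rewrite /G; case: constructive_indefinite_description. Qed.

Definition yv X Y : Q -> M := if Y == sR then rho else G X Y.
Definition Inv t Y m := forall q w, q \in Lof t :&: Y -> LP t w q -> m = w ** yv (Lof t) Y q.

Lemma Eqz t v X Y q1 q2 w1 w2 : Lof t = X -> Rof v = Y ->
  q1 \in X :&: Y -> q2 \in X :&: Y -> LP t w1 q1 -> LP t w2 q2 ->
  w1 ** yv X Y q1 = w2 ** yv X Y q2.
Proof.
move=> HX HY Hq1 Hq2 H1 H2; rewrite /yv; case: eqP => [E|NE].
  move: Hq1 Hq2; rewrite E => /setIP [_ Hq1] /setIP [_ Hq2].
  exact: F3 H1 (rhoP Hq1) H2 (rhoP Hq2).
have [u [Hu [a [Ha Hinst _]]]] := GP (ex_intro _ t HX) (ex_intro _ v HY).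
have [V HV] : exists V : Q -> M, forall q, q \in Y -> SP q v (V q).
  apply: (fchoiceD (C := fun q => q \in Y) (P := fun q w => SP q v w) e) => q.
  by rewrite -HY => /Rof_spec [w Hw]; exists w.
have [z Hz] : exists z, forall q, q \in X :&: Y -> V q = G X Y q ** z.
  apply: Hinst; exists (a q1 ** V q1) => q Hq; case/setIP: (Hq) => _ HqY; case/setIP: (Hq1) => _ Hq1Y.
  exact: F3 (Ha q Hq) (HV q HqY) (Ha q1 Hq1) (HV q1 Hq1Y).
apply: (Hrc (c:=z)); rewrite -!opA -!Hz //.
case/setIP: (Hq1) => _ Hq1Y; case/setIP: (Hq2) => _ Hq2Y.
exact: F3 H1 (HV q1 Hq1Y) H2 (HV q2 Hq2Y).
Qed.


Definition psispec X s Y (o : option M) :=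
  (dL X s :&: Y == set0 -> o = None) /\
  (dL X s :&: Y != set0 -> exists z, o = Some z /\
     forall u v m, Lof u = X -> Rof v = Y -> Inv u (dR Y s) m -> Inv (rcons u s) Y (m ** z)).

Lemma psiex X s Y : exists o, psispec X s Y o.
Proof.
case: (boolP (dL X s :&: Y == set0)) => [E|NE].
  by exists None; split => //; rewrite E.
case: (classic (exists u, Lof u = X)) => [[u0 Hu0]|hX]; last first.
  exists (Some e); split; first by rewrite (negbTE NE).
  by move=> _; exists e; split => // u v m Hu; case: hX; exists u.
case: (classic (exists v, Rof v = Y)) => [[v0 Hv0]|hY]; last first.
  exists (Some e); split; first by rewrite (negbTE NE).
  by move=> _; exists e; split => // u v m _ Hv; case: hY; exists v.
have [q0 /setIP [Hq0X Hq0Y]] := set0Pn _ NE.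
move: (Hq0X); rewrite inE => /pbP [p HpX [w0 Hw0]].
have HpY : p \in dR Y s by rewrite inE; apply/pbP; exists q0 => //; exists w0.
have key : forall p', p' \in X -> forall q' w', q' \in Y -> lpath p' [:: s] w' q' ->
    forall t wt, Lof t = X -> LP t wt p' ->
    LP (rcons t s) (wt ** w') q' /\ q' \in Lof (rcons t s) :&: Y.
  move=> p' Hp' q' w' Hq' Hl t wt Ht [p0 Hp0 H0]; split; first by exists p0 => //; exact: lpath_snoc H0 Hl.
  rewrite Lof_rcons Ht inE Hq' andbT inE; apply/pbP; exists p' => //; by exists w'.
case: (eqVneq (dR Y s) sR) => [ER|NR].
- have HpR : p \in sR by rewrite -ER.
  have [f Hf Hpf] := rhoP HpR.
  have HfR : f \in dR Y s by rewrite ER inE; apply/pbP; exists e, f => //; exact: ds_refl.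
  move: HfR; rewrite inE => /pbP [q' Hq'Y [w' Hw']].
  exists (Some (w' ** yv (dL X s) Y q')); split; first by rewrite (negbTE NE).
  move=> _; eexists; split; first reflexivity.
  move=> u v m Hu Hv Hinv q w Hq Hw.
  have [wp Hwp] : exists wp, LP u wp p by apply/Lof_spec; rewrite Hu.
  have Hm := Hinv p wp.
  rewrite /yv ER eqxx in Hm.
  have {}Hm : m = wp ** rho p by apply: Hm => //; rewrite inE Hu HpX HpR.
  have [Hpath Hq'in] := key p HpX q' (rho p ** w') Hq'Y (eps_lpath1 Hpf Hw') u wp Hu Hwp.
  rewrite Lof_rcons Hu in Hq Hq'in *.
  transitivity ((wp ** (rho p ** w')) ** yv (dL X s) Y q'); first by rewrite Hm !opA.
  apply: (Eqz (t := rcons u s) (v := v)) => //; by rewrite Lof_rcons Hu.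
- have [ur [Hur [a [Ha Hinst _]]]] := GP (ex_intro _ u0 Hu0) (ex_intro _ (s :: v0) (f_equal (dR^~ s) Hv0)).
  have [qp Hqp] : exists qp : Q -> Q * M, forall p', p' \in dR Y s ->
      (qp p').1 \in Y /\ lpath p' [:: s] (qp p').2 (qp p').1.
    apply: (fchoiceD (C := fun p' => p' \in dR Y s)
              (P := fun p' qw => qw.1 \in Y /\ lpath p' [:: s] qw.2 qw.1) (p, e)) => p'.
    by rewrite inE => /pbP [q1 Hq1 [w1 Hw1]]; exists (q1, w1).
  pose b := fun p' => (qp p').2 ** yv (dL X s) Y (qp p').1.
  have [z Hz] : exists z, forall q, q \in X :&: dR Y s -> b q = G X (dR Y s) q ** z.
    apply: Hinst; exists (a p ** b p) => p' Hp'.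
    have Hp'X : p' \in X by case/setIP: Hp'.
    have Hp'Y : p' \in dR Y s by case/setIP: Hp'.
    have [H1 H2] := Hqp p' Hp'Y; have [H3 H4] := Hqp p HpY.
    have [K1 K2] := key p' Hp'X _ _ H1 H2 ur (a p') Hur (Ha p' Hp').
    have [K3 K4] := key p HpX _ _ H3 H4 ur (a p) Hur (Ha p (introT setIP (conj HpX HpY))).
    rewrite /b !opA; rewrite Lof_rcons Hur in K2 K4.
    apply: (Eqz (t := rcons ur s) (v := v0)) => //; by rewrite Lof_rcons Hur.
  exists (Some z); split; first by rewrite (negbTE NE).
  move=> _; eexists; split; first reflexivity.
  move=> u v m Hu Hv Hinv q w Hq Hw.
  have [wp Hwp] : exists wp, LP u wp p by apply/Lof_spec; rewrite Hu.
  have Hm := Hinv p wp.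
  rewrite /yv (negbTE NR) Hu in Hm.
  have {}Hm : m = wp ** G X (dR Y s) p by apply: Hm => //; rewrite inE HpX HpY.
  have [H3 H4] := Hqp p HpY.
  have [Hpath Hq'in] := key p HpX _ _ H3 H4 u wp Hu Hwp.
  rewrite Hm -opA -Hz; last by rewrite inE HpX HpY.
  rewrite /b opA.
  rewrite Lof_rcons Hu in Hq Hq'in *.
  apply: (Eqz (t := rcons u s) (v := v)) => //; by rewrite Lof_rcons Hu.
Qed.


Definition psi X s Y := proj1_sig (constructive_indefinite_description _ (psiex X s Y)).
Lemma psiP X s Y : psispec X s Y (psi X s Y).
Proof. by rewrite /psi; case: constructive_indefinite_description. Qed.

Lemma psi_star_rcons (ps : {set Q} -> Sigma -> {set Q} -> option M) l t s r :
  psi_star op e dL dR ps l (rcons t s) r =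
  match psi_star op e dL dR ps l t (dR r s), ps (foldl dL l t) s r with
  | Some a, Some b => Some (a ** b) | _, _ => None end.
Proof. by rewrite /psi_star rev_rcons /= revK. Qed.

Lemma inv_main t v : Lof t :&: Rof v != set0 ->
  exists m, psi_star op e dL dR psi I t (Rof v) = Some m /\ Inv t (Rof v) m.
Proof.
elim/last_ind: t v => [|t s IH] v Hne.
  exists e; split => // q w Hq [p0 Hp0 /lpath_nil [Epq ->]].
  rewrite op1m /yv; case: eqP => [E|NE].
    have Hq' : q \in sR by rewrite -E; case/setIP: Hq.
    apply: (Hfun Heps); rewrite -[[::]]cats0; apply/lang_split.
    exists q, e, (rho q); split; [rewrite /LP; exists p0 => //; rewrite Epq; exact: lpath0 | exact: rhoP | by rewrite op1m].
  have [u [Hu [a [_ _ HI]]]] := GP (ex_intro _ [::] erefl) (ex_intro _ v erefl).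
  by rewrite HI.
have [q0 /setIP [Hq0L Hq0R]] := set0Pn _ Hne.
move: (Hq0L); rewrite Lof_rcons inE => /pbP [p HpL [w0 Hw0]].
have Hne' : Lof t :&: Rof (s :: v) != set0.
  apply/set0Pn; exists p; rewrite inE HpL /= inE; apply/pbP; exists q0 => //; by exists w0.
have [m [Hps Hinv]] := IH _ Hne'.
have [_ Hs] := psiP (Lof t) s (Rof v).
have [|z [Hz Hprop]] := Hs; first by rewrite -Lof_rcons.
exists (m ** z); rewrite psi_star_rcons; split.
  by move: Hps Hz; rewrite /Lof /= => -> ->.
exact: Hprop.
Qed.

Lemma final t m : psi_star op e dL dR psi I t sR = Some m <-> lang op e Delta I F t m.
Proof.
split.
- case: (boolP (Lof t :&: sR == set0)) => [E|NE] H.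
    case/lastP: t E H => [|t s] E H.
      exfalso; case: Heps => p [f [Hp Hf Hd]].
      have : p \in Lof [::] :&: sR.
        rewrite inE Hp inE; apply/pbP; exists e, f => //.
      by rewrite (eqP E) inE.
    move: H; rewrite psi_star_rcons.
    have [Hn _] := psiP (Lof t) s sR.
    rewrite -Lof_rcons in Hn; move: (Hn E); rewrite /Lof => ->.
    by case: psi_star.
  have [m0 [H0 Hinv]] := inv_main (v := [::]) NE.
  move: H; rewrite H0 => -[<-].
  have [q Hq] := set0Pn _ NE.
  have [w Hw] : exists w, LP t w q by apply/Lof_spec; case/setIP: Hq.
  rewrite (Hinv q w Hq Hw) /yv eqxx -[t]cats0; apply/lang_split.
  exists q, w, (rho q); split => //; apply: rhoP; by case/setIP: Hq.
- move=> H; have : lang op e Delta I F (t ++ [::]) m by rewrite cats0.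
  case/lang_split => q [w1 [w2 [H1 H2 ->]]].
  have Hq : q \in Lof t :&: sR.
    rewrite inE; apply/andP; split; first by apply/Lof_spec; exists w1.
    by rewrite inE; apply/pbP; exists w2.
  have [m0 [H0 Hinv]] := inv_main (v := [::]) (introT (set0Pn _) (ex_intro _ q Hq)).
  rewrite H0 (Hinv q w1 Hq H1) /yv eqxx; congr Some.
  have HqR : q \in sR by case/setIP: Hq.
  exact: (F3 H1 (rhoP HqR) H1 H2).
Qed.

Lemma main_exists :
  exists (L R : finType) (sL : L) (sR : R)
         (dL : L -> Sigma -> L) (dR : R -> Sigma -> R)
         (psi : L -> Sigma -> R -> option M),
    [/\ (#|L| <= 2 ^ #|Q|)%N, (#|R| <= 2 ^ #|Q|)%N &
        forall (t : seq Sigma) (m : M),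
          bimachine_output op e dL dR psi sL sR t = Some m <->
          lang op e Delta I F t m].
Proof.
have Hc : #|{set Q}| = 2 ^ #|Q|.
  have -> : #|{set Q}| = #|[set: {set Q}]| by rewrite cardsT.
  rewrite (_ : [set: {set Q}] = powerset [set: Q]) ?card_powerset ?cardsT //.
  by apply/setP => A; rewrite in_setT powersetE subsetT.
exists {set Q}, {set Q}, I, sR, dL, dR, psi; split; [by rewrite Hc | by rewrite Hc |].
move=> t m; exact: final.
Qed.

End Main.

Theorem theorem2
  (M : eqType) (op : M -> M -> M) (e : M)
  (eqz : M -> M -> bool) (eta : M -> M -> M * M) (inv : M -> M)
  (Hmge : is_mge_monoid op e)
  (Heff : is_effective op e eqz eta inv)
  (Sigma Q : finType) (I F : {set Q})
  (Delta : seq (Q * (option Sigma * M) * Q))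
  (Hfun : functional op e Delta I F)
  (Heps : lang op e Delta I F [::] e) :
  exists (L R : finType) (sL : L) (sR : R)
         (dL : L -> Sigma -> L) (dR : R -> Sigma -> R)
         (psi : L -> Sigma -> R -> option M),
    [/\ (#|L| <= 2 ^ #|Q|)%N, (#|R| <= 2 ^ #|Q|)%N &
        forall (t : seq Sigma) (m : M),
          bimachine_output op e dL dR psi sL sR t = Some m <->
          lang op e Delta I F t m].
Proof.
case: Hmge => [[HA H1 H2] Hrc Hmg].
exact: (main_exists HA H1 H2 Hrc Hmg Hfun Heps).
Qed.
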